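(* Let $p$ be a propositional variable. The formula $\neg\Box\bot\to(\neg\neg\Box p\to\Box\neg\neg p)$ is derivable in $\mathsf{CK}\oplus\mathsf{N}_{\Diamond\Box}\oplus\mathsf{I}_{\Diamond\Box}$ but not in $\mathsf{CK}$.
   Context: Formulas: $\mathbf{L}$ is generated from a countably infinite set of propositional variables by $\varphi ::= p \mid \bot \mid \varphi\wedge\varphi \mid \varphi\vee\varphi \mid \varphi\to\varphi \mid \Box\varphi \mid \Diamond\varphi$; $\neg\varphi:=\varphi\to\bot$. Axioms: $\mathsf{K}_\Box$: $\Box(\varphi\to\psi)\to(\Box\varphi\to\Box\psi)$; $\mathsf{K}_\Diamond$: $\Box(\varphi\to\psi)\to(\Diamond\varphi\to\Diamond\psi)$; $\mathsf{N}_{\Diamond\Box}$: $\Diamond\bot\to\Box\bot$; $\mathsf{I}_{\Diamond\Box}$: $(\Diamond\varphi\to\Box\psi)\to\Box(\varphi\to\psi)$. For a set $\mathsf{Ax}$ of axioms, $\mathsf{CK}\oplus\mathsf{Ax}$ is the relation $\Gamma\vdash_{\mathsf{Ax}}\varphi$ inductively generated by: (Ax) $\Gamma\vdash\varphi$ whenever $\varphi$ is a substitution instance of an axiom of a standard Hilbert axiomatisation of intuitionistic propositional logic, of $\mathsf{K}_\Box$, of $\mathsf{K}_\Diamond$, or of an element of $\mathsf{Ax}$; (El) $\Gamma\vdash\varphi$ if $\varphi\in\Gamma$; (MP) from $\Gamma\vdash\varphi$ and $\Gamma\vdash\varphi\to\psi$ infer $\Gamma\vdash\psi$; (Nec) from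 $\emptyset\vdash\varphi$ infer $\Gamma\vdash\Box\varphi$. $\mathsf{CK}$ is the case $\mathsf{Ax}=\emptyset$. A formula is derivable in a logic if $\emptyset\vdash_{\mathsf{Ax}}\varphi$. *)

(* Defs.v *)
Inductive form : Type :=
| Var : nat -> form
| Bot : form
| And : form -> form -> form
| Or  : form -> form -> form
| Imp : form -> form -> form
| Box : form -> form
| Dia : form -> form.

Definition Neg (a : form) : form := Imp a Bot.

Fixpoint subst (s : nat -> form) (a : form) : form :=
  match a with
  | Var n => s n
  | Bot => Bot
  | And a b => And (subst s a) (subst s b)
  | Or a b => Or (subst s a) (subst s b)
  | Imp a b => Imp (subst s a) (subst s b)
  | Box a => Box (subst s a)
  | Dia a => Dia (subst s a)
  end.

Inductive IPC_ax : form -> Prop :=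
| ipc_k  a b   : IPC_ax (Imp a (Imp b a))
| ipc_s  a b c : IPC_ax (Imp (Imp a (Imp b c)) (Imp (Imp a b) (Imp a c)))
| ipc_a1 a b   : IPC_ax (Imp (And a b) a)
| ipc_a2 a b   : IPC_ax (Imp (And a b) b)
| ipc_a3 a b   : IPC_ax (Imp a (Imp b (And a b)))
| ipc_o1 a b   : IPC_ax (Imp a (Or a b))
| ipc_o2 a b   : IPC_ax (Imp b (Or a b))
| ipc_o3 a b c : IPC_ax (Imp (Imp a c) (Imp (Imp b c) (Imp (Or a b) c)))
| ipc_efq a    : IPC_ax (Imp Bot a).

Inductive K_ax : form -> Prop :=
| k_box a b : K_ax (Imp (Box (Imp a b)) (Imp (Box a) (Box b)))
| k_dia a b : K_ax (Imp (Box (Imp a b)) (Imp (Dia a) (Dia b))).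

Definition N_DiaBox : form := Imp (Dia Bot) (Box Bot).
Definition I_DiaBox : form :=
  Imp (Imp (Dia (Var 0)) (Box (Var 1))) (Box (Imp (Var 0) (Var 1))).

(* The relation Gamma |-_Ax phi of CK (+) Ax; Ax is a set of formulas,
   all of whose substitution instances are axioms. *)
Inductive deriv (Ax : form -> Prop) (G : form -> Prop) : form -> Prop :=
| d_ipc a : IPC_ax a -> deriv Ax G a
| d_k a : K_ax a -> deriv Ax G a
| d_ax s a : Ax a -> deriv Ax G (subst s a)
| d_el a : G a -> deriv Ax G a
| d_mp a b : deriv Ax G a -> deriv Ax G (Imp a b) -> deriv Ax G b
| d_nec a : deriv Ax (fun _ => False) a -> deriv Ax G (Box a).

Definition noAx : form -> Prop := fun _ => False.
Definition NI_ax : form -> Prop := fun a => a = N_DiaBox \/ a = I_DiaBox.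

Definition derivable (Ax : form -> Prop) (a : form) : Prop :=
  deriv Ax (fun _ => False) a.

(* Main.v *)
Require Import Defs.

Section S.
Variable Ax : form -> Prop.

Lemma imp_const G a b : deriv Ax G b -> deriv Ax G (Imp a b).
Proof. intro H. eapply d_mp. exact H. apply d_ipc, ipc_k. Qed.

Lemma imp_id G a : deriv Ax G (Imp a a).
Proof.
  eapply d_mp. apply (d_ipc _ _ _ (ipc_k a a)).
  eapply d_mp. apply (d_ipc _ _ _ (ipc_k a (Imp a a))).
  apply d_ipc, ipc_s.
Qed.

Lemma ded_gen G' b : deriv Ax G' b ->
  forall G a, (forall x, G' x -> G x \/ x = a) -> deriv Ax G (Imp a b).
Proof.
  induction 1; intros G0 a0 HG.
  - apply imp_const, d_ipc; auto.
  - apply imp_const, d_k; auto.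
  - apply imp_const, d_ax; auto.
  - destruct (HG _ H) as [H1|H1].
    + apply imp_const, d_el; auto.
    + subst; apply imp_id.
  - specialize (IHderiv1 _ _ HG). specialize (IHderiv2 _ _ HG).
    eapply d_mp. exact IHderiv1. eapply d_mp. exact IHderiv2. apply d_ipc, ipc_s.
  - apply imp_const, d_nec; auto.
Qed.

Lemma ded G a b : deriv Ax (fun x => G x \/ x = a) b -> deriv Ax G (Imp a b).
Proof. intro H. eapply ded_gen. exact H. auto. Qed.
End S.

Inductive W := wr | wa | wv | wu.
Definition le (w w' : W) : Prop := w = w' \/ (w = wr /\ w' = wa).
Definition R (w x : W) : Prop := (w = wr /\ x = wv) \/ (w = wa /\ x = wu).

Fixpoint sat (w : W) (f : form) : Prop :=
  match f with
  | Var _ => w = wu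
  | Bot => False
  | And a b => sat w a /\ sat w b
  | Or a b => sat w a \/ sat w b
  | Imp a b => forall w', le w w' -> sat w' a -> sat w' b
  | Box a => forall w' x, le w w' -> R w' x -> sat x a
  | Dia _ => False
  end.

Lemma le_refl w : le w w. Proof. left; auto. Qed.
Lemma le_trans w1 w2 w3 : le w1 w2 -> le w2 w3 -> le w1 w3.
Proof. unfold le; intros [H|[H H']] [H2|[H2 H2']]; subst; auto; discriminate. Qed.

Lemma persist f : forall w w', le w w' -> sat w f -> sat w' f.
Proof.
  induction f; simpl; intros w w' Hl H; auto.
  - destruct Hl as [->|[-> ->]]; auto; discriminate.
  - destruct H; split; eauto.
  - destruct H; [left|right]; eauto.
  - intros w'' H1 H2. apply (H w''); auto. eapply le_trans; eauto.
  - intros w'' x H1 H2. apply (H w'' x); auto. eapply le_trans; eauto.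
Qed.

Lemma sound G f : deriv noAx G f -> (forall x, G x -> forall w, sat w x) -> forall w, sat w f.
Proof.
  induction 1; intros HG w.
  - destruct H; simpl; intros.
    + eapply persist; eauto.
    + apply (H0 w'1 ltac:(eauto using le_trans) H4 w'1 (le_refl _)).
      apply (H2 w'1); auto.
    + tauto.
    + tauto.
    + split; auto. eapply persist; eauto.
    + auto.
    + auto.
    + destruct H4; [apply (H0 w'1) | apply (H2 w'1)]; auto using le_refl.
      eapply le_trans; eauto.
    + destruct H0.
  - destruct H; simpl; intros.
    + apply (H0 w'1 x ltac:(eauto using le_trans) H4 x (le_refl _)).
      apply (H2 w'1 x); auto.
    + destruct H2.
  - destruct H.
  - apply HG; auto.
  - simpl in IHderiv2. apply (IHderiv2 HG w w); auto using le_refl.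
  - simpl; intros. apply IHderiv. intros _ [].
Qed.

Theorem mainTheorem17 : forall p : nat,
  let phi := Imp (Neg (Box Bot))
                 (Imp (Neg (Neg (Box (Var p)))) (Box (Neg (Neg (Var p))))) in
  derivable NI_ax phi /\ ~ derivable noAx phi.
Proof.
  intros p phi. split.
  - unfold phi, derivable.
    apply ded. apply ded.
    set (G := fun x : form => ((fun _ : form => False) x \/ x = Neg (Box Bot)) \/ x = Neg (Neg (Box (Var p)))).
    eapply d_mp; [| exact (d_ax NI_ax G (fun n => match n with 0 => Neg (Var p) | _ => Bot end) I_DiaBox (or_intror eq_refl))].
    apply ded. 
    set (G2 := fun x => G x \/ x = Dia (Neg (Var p))).
    eapply d_mp; [| apply d_ipc, ipc_efq].
    eapply d_mp; [| apply d_el; unfold G2, G; left; right; reflexivity].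
    apply ded.
    set (G3 := fun x => G2 x \/ x = Box (Var p)).
    eapply d_mp; [| apply d_el; unfold G3, G2, G; left; left; left; right; reflexivity].
    eapply d_mp; [| exact (d_ax NI_ax G3 (fun _ => Bot) N_DiaBox (or_introl eq_refl))].
    eapply d_mp; [apply d_el; unfold G3, G2; left; right; reflexivity |].
    eapply d_mp; [| apply d_k, k_dia].
    eapply d_mp; [apply d_el; unfold G3; right; reflexivity |].
    eapply d_mp; [| apply d_k, k_box].
    apply d_nec. apply ded. apply ded.
    eapply d_mp; apply d_el; [left; right| right]; reflexivity.
  - intro H. pose proof (sound _ _ H (fun x Hx => match Hx with end) wr) as S.
    simpl in S.
    assert (HBa : sat wa (Box (Var p))).
    { simpl. intros w' x [<-|[? _]] [[? _]|[_ ->]]; try discriminate; reflexivity. }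
    refine (S wr (le_refl _) _ wr (le_refl _) _ wr wv (le_refl _) _ wv (le_refl _) _); simpl.
    + intros w' Hl Hb. destruct Hl as [<-|[_ ->]].
      * apply (Hb wr wv (le_refl _)). left; auto.
      * apply (Hb wa wu (le_refl _)). right; auto.
    + intros w' Hl Hn. destruct Hl as [<-|[_ ->]].
      * apply (Hn wa). right; auto. exact HBa.
      * apply (Hn wa (le_refl _)). exact HBa.
    + left; auto.
    + intros w' [<-|[? _]] Hu; discriminate.
Qed.
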